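(* Let $S$ be a string of length $n$ and, for $1\le i\le n$, let $c_i$ be the center of the longest palindromic suffix of $S[1..i]$. Then the array $(\tilde b_1,\dots,\tilde b_n)$ with $\tilde b_i=2c_i-i$ is a counter array, i.e. $1\le \tilde b_i\le i$ for all $i$ and $\tilde b_{i+1}\ge \tilde b_i-1$ for all $1\le i<n$. Moreover, the map $(c_1,\dots,c_n)\mapsto(\tilde b_1,\dots,\tilde b_n)$ is injective.
   Context: The center of a substring $S[a..b]$ is $(a+b)/2$. A counter array of length $n$ is an integer array $(a_1,\dots,a_n)$ with $1\le a_i\le i$ for all $i$ and $a_{i+1}\ge a_i-1$ for all $1\le i<n$. *)

(* Defs.v *)
(* Strings are sequences over an arbitrary eqType alphabet;
   positions are 1-indexed as in the paper. *)
From mathcomp Require Import all_boot all_order all_algebra.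
Set Implicit Arguments. Unset Strict Implicit. Unset Printing Implicit Defensive.
Import Order.TTheory GRing.Theory Num.Theory.
Local Open Scope ring_scope.

(* S[a..b] (1-indexed, inclusive): the items at positions a, a+1, ..., b. *)
Definition substr (T : Type) (S : seq T) (a b : nat) : seq T :=
  drop a.-1 (take b S).

Definition palindrome (T : eqType) (s : seq T) : bool := rev s == s.

(* Start position a of the longest palindromic suffix S[a..i] of S[1..i]:
   the smallest a in 1..i such that S[a..i] is a palindrome
   (a = i always works for 1 <= i <= size S). *)
Definition lps_start (T : eqType) (S : seq T) (i : nat) : nat :=
  (find (fun a => palindrome (substr S a i)) (iota 1 i)).+1.

Definition center (a b : nat) : rat := (a%:R + b%:R) / 2%:R.

Definition lps_center (T : eqType) (S : seq T) (i : nat) : rat :=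
  center (lps_start S i) i.

Definition btilde (T : eqType) (S : seq T) (i : nat) : rat :=
  2%:R * lps_center S i - i%:R.

(* Main.v *)
Require Import Defs.
From mathcomp Require Import all_boot all_order all_algebra.
From mathcomp Require Import ring lra zify.
Import Order.TTheory GRing.Theory Num.Theory.
Local Open Scope ring_scope.

Lemma btildeE {T : eqType} (S : seq T) i : btilde S i = (lps_start S i)%:R.
Proof. rewrite /btilde /lps_center /center. field. by []. Qed.

Lemma pal_small {T : eqType} (s : seq T) : (size s <= 1)%N -> palindrome s.
Proof. by case: s => [|x [|y s]] //= _; rewrite /palindrome. Qed.

Lemma lps_has {T : eqType} (S : seq T) i : (1 <= i)%N ->
  has (fun a => palindrome (substr S a i)) (iota 1 i).
Proof.
move=> Hi; apply/hasP; exists i.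
  rewrite mem_iota; lia.
apply: pal_small; rewrite /substr size_drop size_take.
case: ifP => H; lia.
Qed.

Lemma lps_bounds {T : eqType} (S : seq T) i : (1 <= i)%N ->
  (1 <= lps_start S i <= i)%N.
Proof.
move=> Hi; rewrite /lps_start /=.
have := lps_has S i Hi; rewrite has_find size_iota => H; lia.
Qed.

Lemma lps_pal {T : eqType} (S : seq T) i : (1 <= i)%N ->
  palindrome (substr S (lps_start S i) i).
Proof.
move=> Hi; have H := lps_has S i Hi.
have := nth_find 0%N H; rewrite /lps_start.
have : (find (fun a => palindrome (substr S a i)) (iota 1 i) < i)%N.
  by move: H; rewrite has_find size_iota.
by move=> Hl; rewrite nth_iota // add1n.
Qed.

Lemma lps_le {T : eqType} (S : seq T) i b : (1 <= b <= i)%N ->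
  palindrome (substr S b i) -> (lps_start S i <= b)%N.
Proof.
move=> Hb Hp; rewrite /lps_start.
case: (ltnP (b.-1) (find (fun a => palindrome (substr S a i)) (iota 1 i))) => H.
  have := before_find 0%N H; rewrite nth_iota; last lia.
  have -> : (1 + b.-1 = b)%N by lia.
  by rewrite Hp.
lia.
Qed.

Lemma pal_inner {T : eqType} (S : seq T) a i :
  (1 <= a <= i)%N -> (i < size S)%N ->
  palindrome (substr S a i.+1) -> palindrome (substr S a.+1 i).
Proof.
move=> Ha Hi; case: S Hi => [//|s0 S'] Hi.
set S := s0 :: S'.
rewrite /substr (take_nth s0 Hi) drop_rcons; last by rewrite size_take; case: ifP; lia.
rewrite (drop_nth s0); last by rewrite size_take; case: ifP; lia.
have -> : (a.-1.+1 = a)%N by lia.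
rewrite /palindrome rev_rcons rev_cons /= => /eqP [] <- /rcons_inj [] ->.
by rewrite eqxx.
Qed.

Theorem lemma3p5 (T : eqType) (S : seq T) (n : nat) (Hn : size S = n) :
  (* counter array: integer entries with 1 <= b~_i <= i *)
  (forall i : nat, (1 <= i <= n)%N ->
     exists a : nat, btilde S i = a%:R /\ (1 <= a <= i)%N) /\
  (* b~_{i+1} >= b~_i - 1 *)
  (forall i : nat, (1 <= i < n)%N -> btilde S i - 1 <= btilde S i.+1) /\
  (* injectivity of (c_1,...,c_n) |-> (b~_1,...,b~_n) *)
  (forall S' : seq T, size S' = n ->
     (forall i : nat, (1 <= i <= n)%N -> btilde S i = btilde S' i) ->
     forall i : nat, (1 <= i <= n)%N -> lps_center S i = lps_center S' i).
Proof.
split; [|split].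
- move=> i /andP [Hi _]; exists (lps_start S i); split; first exact: btildeE.
  exact: lps_bounds.
- move=> i /andP [Hi Hin].
  rewrite !btildeE.
  suff H : (lps_start S i <= (lps_start S i.+1).+1)%N.
    rewrite lerBlDr natr1 ler_nat; lia.
  have := lps_bounds S i Hi; have := lps_bounds S i.+1 (isT : (1 <= i.+1)%N).
  set a := lps_start S i.+1 => Ha Hb.
  case: (leqP i a) => Hai; first lia.
  apply: lps_le; first lia.
  apply: pal_inner; [lia | by rewrite Hn | exact: lps_pal].
- move=> S' _ Hb i Hi; have := Hb i Hi; rewrite !btildeE => /eqP.
  by rewrite eqr_nat => /eqP; rewrite /lps_center => ->.
Qed.
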